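(* Let $(G,\sigma)$ be a signed graph, $p\ge2$, $K\in\mathbb{R}$, $N\in(0,\infty]$ and $x\in V$. Then $(G,\sigma)$ satisfies $CD_p^\sigma(K,N)$ at $x$ if and only if \[ \Gamma_{p,2}^{\sigma}(f,f)(x)\geq\frac{1}{N}(\Delta_{p}^{\sigma}f(x))^{2}+K(\Gamma^{\sigma}_{p}(f,f)(x))^{\frac{2p-2}{p}} \] holds for every function $f:V\to\mathbb{R}$.
   Context: $G=(V,E)$ is a locally finite simple graph with degrees $d_x$; $\sigma:E\to\{\pm1\}$, $\sigma_{xy}=\sigma(\{x,y\})$. For $p>1$: $\Delta_{p}^{\sigma}f(x)=\frac{1}{d_{x}}\sum_{y\sim x}|\sigma_{xy}f(y)-f(x)|^{p-2}(\sigma_{xy}f(y)-f(x))$ (with $|t|^{p-2}t=0$ at $t=0$); $\Gamma_p^\sigma(f,g)(x)=\frac{1}{2d_{x}}\sum_{y\sim x}|\sigma_{xy}f(y)-f(x)|^{p-2}(\sigma_{xy}f(y)-f(x))(\sigma_{xy}g(y)-g(x))$; $\mathscr{L}^\sigma_{p,f}\varphi(x)=\frac{1}{d_{x}}\sum_{y\sim x}|\sigma_{xy}f(y)-f(x)|^{p-2}(\varphi(y)-\varphi(x))$; $\Gamma_{p,2}^\sigma(f,f)(x)=\frac12\mathscr{L}_{p,f}^\sigma(\Gamma^\sigma_p(f,f))(x)-\Gamma_p^\sigma(f,\Delta_p^\sigma f)(x)$. $(G,\sigma)$ satisfies $CD_p^\sigma(K,N)$ at $x$ if the displayed inequality holds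 for every $f:V\to\mathbb{R}$ with $\sigma_{xy}f(y)-f(x)\neq0$ for every neighbor $y\sim x$ ($\frac1N=0$ if $N=\infty$). *)

(* Defs.v *)
From HB Require Import structures.
From mathcomp Require Import all_boot all_order all_algebra.
From mathcomp Require Import all_classical all_reals exp.
Set Implicit Arguments. Unset Strict Implicit. Unset Printing Implicit Defensive.
Import Order.TTheory GRing.Theory Num.Theory.
Local Open Scope ring_scope.

(* A locally finite simple signed graph on vertex type V:
   nbrs x is the (finite, duplicate-free) list of neighbours of x;
   adjacency is symmetric and loop-free; sgn x y is sigma({x,y}) in {+1,-1}. *)
Record signed_graph (V : eqType) (R : realType) := SignedGraph {
  nbrs : V -> seq V;
  nbrs_uniq : forall x, uniq (nbrs x);
  nbrs_sym : forall x y, (y \in nbrs x) = (x \in nbrs y);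
  nbrs_irr : forall x, x \notin nbrs x;
  sgn : V -> V -> R;
  sgn_sym : forall x y, y \in nbrs x -> sgn x y = sgn y x;
  sgn_pm : forall x y, y \in nbrs x -> sgn x y = 1 \/ sgn x y = -1
}.

Section Ops.
Variables (V : eqType) (R : realType) (G : signed_graph V R) (p : R).

Definition deg (x : V) : R := (size (nbrs G x))%:R.

Definition dlt (f : V -> R) (x y : V) : R := sgn G x y * f y - f x.

(* |t|^(p-2) t  (equals 0 at t = 0) *)
Definition pw (t : R) : R := `|t| `^ (p - 2) * t.

Definition sLap (f : V -> R) (x : V) : R :=
  (deg x)^-1 * \sum_(y <- nbrs G x) pw (dlt f x y).

Definition sGam (f g : V -> R) (x : V) : R :=
  (2 * deg x)^-1 * \sum_(y <- nbrs G x) pw (dlt f x y) * dlt g x y.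

Definition sLop (f phi : V -> R) (x : V) : R :=
  (deg x)^-1 * \sum_(y <- nbrs G x) `|dlt f x y| `^ (p - 2) * (phi y - phi x).

Definition sGam2 (f : V -> R) (x : V) : R :=
  2^-1 * sLop f (sGam f f) x - sGam f (sLap f) x.

Definition invN (N : \bar R) : R :=
  match N with EFin r => r^-1 | _ => 0 end.

Definition CD_ineq (K : R) (N : \bar R) (f : V -> R) (x : V) : Prop :=
  invN N * (sLap f x) ^+ 2 + K * (sGam f f x) `^ ((2 * p - 2) / p) <= sGam2 f x.

Definition CDp (K : R) (N : \bar R) (x : V) : Prop :=
  forall f : V -> R, (forall y, y \in nbrs G x -> dlt f x y != 0) -> CD_ineq K N f x.

End Ops.

(* Main.v *)
Require Import Defs.
From HB Require Import structures.
From mathcomp Require Import all_boot all_order all_algebra.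
From mathcomp Require Import all_classical all_reals exp.
From mathcomp Require Import topology normedtype sequences.
Import Order.TTheory GRing.Theory Num.Theory.
Import numFieldNormedType.Exports.
Local Open Scope ring_scope.
Local Open Scope classical_set_scope.

Section C.
Variable R : realType.

Lemma cont_powRn (c : R) : 0 <= c -> continuous (fun t : R => `|t| `^ c).
Proof.
rewrite le_eqVlt => /predU1P[<-|c0].
  have -> : (fun t : R => `|t| `^ 0) = fun=> 1 by apply: funext => t; rewrite powRr0.
  exact: cst_continuous.
move=> t; have [->|t0] := eqVneq t 0.
  rewrite /continuous_at normr0 powR0 ?gt_eqF//.
  apply/cvgrPdist_lt => e e0.
  near=> z.
  rewrite sub0r normrN ger0_norm ?powR_ge0//.
  have -> : e = (e `^ c^-1) `^ c by rewrite -powRrM mulVf ?gt_eqF// powRr1 // ltW.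
  apply: gt0_ltr_powR => //; rewrite ?nnegrE ?powR_ge0//.
  near: z.
  exact: (nbhs0_lt (V:=R^o)) (powR_gt0 _ _).
have E : {near t, (fun z : R => expR (c * ln `|z|)) =1 (fun z : R => `|z| `^ c)}.
  near=> z; rewrite /powR gt_eqF// normr_gt0; near: z.
  have : {for t, continuous (fun z : R => `|z|)} by apply: norm_continuous.
  have t0' : 0 < `|t| by rewrite normr_gt0.
  move=> /cvgrPdist_lt/(_ `|t| t0').
  by apply: filterS => z; apply: contraTneq => ->; rewrite normr0 subr0 normr_id ltxx.
apply: cvg_trans (near_eq_cvg E) _.
rewrite /powR gt_eqF ?normr_gt0 //.
apply: (@continuous_comp _ _ _ (fun z : R => c * ln `|z|) expR); last exact: continuous_expR.
apply: continuousM; first exact: cst_continuous.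
have := @continuous_comp _ _ _ (fun z : R => `|z|) (@ln R) t (@norm_continuous _ R^o t).
by apply; apply: continuous_ln; rewrite normr_gt0.
Unshelve. all: by end_near.
Qed.

Lemma C_cst (a : R) : continuous (fun _ : R => a).
Proof. exact: cst_continuous. Qed.

Lemma C_id : continuous (fun e : R => e).
Proof. by move=> x; apply: cvg_id. Qed.

Lemma C_add (h k : R -> R) : continuous h -> continuous k -> continuous (fun e => h e + k e).
Proof. by move=> hc kc x; apply: cvgD; [apply: hc|apply: kc]. Qed.

Lemma C_mul (h k : R -> R) : continuous h -> continuous k -> continuous (fun e => h e * k e).
Proof. by move=> hc kc x; apply: cvgM; [apply: hc|apply: kc]. Qed.

Lemma C_opp (h : R -> R) : continuous h -> continuous (fun e => - h e).
Proof. by move=> hc x; apply: cvgN; apply: hc. Qed.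

Lemma C_sub (h k : R -> R) : continuous h -> continuous k -> continuous (fun e => h e - k e).
Proof. by move=> hc kc; apply: C_add => //; apply: C_opp. Qed.

Lemma C_apow (h : R -> R) c : 0 <= c -> continuous h -> continuous (fun e => `|h e| `^ c).
Proof.
move=> c0 hc x.
have := @continuous_comp _ _ _ h (fun t : R => `|t| `^ c) x (hc x) (@cont_powRn c c0 (h x)).
by apply.
Qed.

Lemma C_sum (V : eqType) (s : seq V) (F : V -> R -> R) :
  (forall y, continuous (F y)) -> continuous (fun e => \sum_(y <- s) F y e).
Proof.
move=> Fc; elim: s => [|y s IH].
  have -> : (fun e => \sum_(y <- [::]) F y e) = fun=> 0 by apply: funext => e; rewrite big_nil.
  exact: C_cst.
have -> : (fun e => \sum_(z <- y :: s) F z e) = fun e => F y e + \sum_(z <- s) F z e.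
  by apply: funext => e; rewrite big_cons.
exact: C_add.
Qed.

End C.

Section G.
Variables (R : realType) (V : eqType) (G : signed_graph V R) (p : R).
Hypothesis hp : 2 <= p.
Variable fe : R -> V -> R.
Hypothesis Hf : forall v, continuous (fun e => fe e v).

Lemma p2 : 0 <= p - 2.
Proof. by rewrite subr_ge0. Qed.

Lemma C_dlt (u v : V) : continuous (fun e => dlt G (fe e) u v).
Proof. by apply: C_sub; [apply: C_mul; [apply: C_cst|apply: Hf]|apply: Hf]. Qed.

Lemma C_pw (h : R -> R) : continuous h -> continuous (fun e => pw p (h e)).
Proof. by move=> hc; rewrite /pw; apply: C_mul => //; apply: C_apow => //; apply: p2. Qed.

Lemma C_sLap u : continuous (fun e => sLap G p (fe e) u).
Proof.
rewrite /sLap; apply: C_mul; first exact: C_cst.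
by apply: C_sum => y; apply: C_pw; apply: C_dlt.
Qed.

Lemma C_sGam (ge : R -> V -> R) : (forall v, continuous (fun e => ge e v)) ->
  forall u, continuous (fun e => sGam G p (fe e) (ge e) u).
Proof.
move=> Hg u; rewrite /sGam; apply: C_mul; first exact: C_cst.
apply: C_sum => y; apply: C_mul; first by apply: C_pw; apply: C_dlt.
by apply: C_sub; [apply: C_mul; [apply: C_cst|apply: Hg]|apply: Hg].
Qed.

Lemma C_sLop (ph : R -> V -> R) : (forall v, continuous (fun e => ph e v)) ->
  forall u, continuous (fun e => sLop G p (fe e) (ph e) u).
Proof.
move=> Hg u; rewrite /sLop; apply: C_mul; first exact: C_cst.
apply: C_sum => y; apply: C_mul; first by apply: C_apow; [apply: p2|apply: C_dlt].
by apply: C_sub; apply: Hg.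
Qed.

Lemma C_sGam2 u : continuous (fun e => sGam2 G p (fe e) u).
Proof.
rewrite /sGam2; apply: C_sub.
  apply: C_mul; first exact: C_cst.
  by apply: C_sLop => v; apply: C_sGam.
by apply: C_sGam => v; apply: C_sLap.
Qed.

Lemma sGam_ge0 f u : 0 <= sGam G p f f u.
Proof.
rewrite /sGam; apply: mulr_ge0; first by rewrite invr_ge0 mulr_ge0 // /deg ler0n.
apply: sumr_ge0 => y _; rewrite /pw -mulrA; apply: mulr_ge0; first exact: powR_ge0.
by rewrite -expr2 sqr_ge0.
Qed.

Lemma C_CD K N u : continuous (fun e => sGam2 G p (fe e) u -
   (invN N * (sLap G p (fe e) u) ^+ 2 + K * (sGam G p (fe e) (fe e) u) `^ ((2 * p - 2) / p))).
Proof.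
apply: C_sub; first exact: C_sGam2.
apply: C_add.
  apply: C_mul; first exact: C_cst.
  have -> : (fun e => sLap G p (fe e) u ^+ 2) = (fun e => sLap G p (fe e) u * sLap G p (fe e) u).
    by apply: funext => e; rewrite expr2.
  by apply: C_mul; apply: C_sLap.
apply: C_mul; first exact: C_cst.
have -> : (fun e => sGam G p (fe e) (fe e) u `^ ((2 * p - 2) / p)) =
          (fun e => `|sGam G p (fe e) (fe e) u| `^ ((2 * p - 2) / p)).
  by apply: funext => e; rewrite ger0_norm //; apply: sGam_ge0.
apply: C_apow; last by apply: C_sGam.
apply: divr_ge0; last by apply: le_trans hp.
by rewrite subr_ge0 -[2 in X in X <= _]mulr1 ler_pM2l // (le_trans _ hp) // ler1n.
Qed.

End G.

Lemma delta_ex (R : realType) (V : eqType) (D : V -> R) (s : seq V) :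
  exists2 d : R, 0 < d & forall e, 0 < e -> e < d -> forall y, y \in s -> e != D y.
Proof.
elim: s => [|y s [d d0 IH]]; first by exists 1 => // e _ _ y; rewrite in_nil.
exists (Num.min d (if 0 < D y then D y else 1)).
  by rewrite lt_min d0 /=; case: ifP.
move=> e e0 ed z; rewrite in_cons => /predU1P[->|zs].
  case: ifP ed => Dy; rewrite lt_min => /andP[_ h].
    by rewrite lt_eqF.
  by apply/eqP => E; move: Dy; rewrite -E e0.
by apply: IH => //; move: ed; rewrite lt_min => /andP[].
Qed.

Theorem proposition4p9 (R : realType) (V : eqType) (G : signed_graph V R)
  (p K : R) (N : \bar R) (x : V) :
  2 <= p -> (0 < N)%E ->
  (CDp G p K N x <-> forall f : V -> R, CD_ineq G p K N f x).
Proof.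
move=> hp _; split; last by move=> H f _; apply: H.
move=> H f.
pose fe (e : R) (v : V) := f v + e * (v == x)%:R.
have Hf : forall v, continuous (fun e => fe e v).
  by move=> v; apply: C_add; [apply: C_cst|apply: C_mul; [apply: C_id|apply: C_cst]].
have fe0 : fe 0 = f by apply: funext => v; rewrite /fe mul0r addr0.
have [d d0 Hd] := @delta_ex _ _ (dlt G f x) (nbrs G x).
pose F e := sGam2 G p (fe e) x -
   (invN N * (sLap G p (fe e) x) ^+ 2 + K * (sGam G p (fe e) (fe e) x) `^ ((2 * p - 2) / p)).
have FC : F e @[e --> 0^'+] --> F 0.
  by apply: cvg_at_right_filter; apply: (@C_CD R V G p hp fe Hf K N x 0).
have : [set z : R | 0 <= z] (F 0).
  apply: (@closed_cvg _ _ _ _ F _ (@closed_ge R 0) _ (F 0) FC).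
  near=> e.
  have [e0 ed] : 0 < e /\ e < d.
    by split; near: e; [apply: nbhs_right_gt|apply: nbhs_right_lt].
  rewrite /= subr_ge0.
  apply: H => y yn.
  have yx : y != x by apply/eqP => E; move: yn; rewrite E (negbTE (nbrs_irr G x)).
  rewrite /dlt /fe (negbTE yx) eqxx mulr0 addr0 mulr1.
  rewrite opprD addrA.
  by have := Hd e e0 ed y yn; rewrite /dlt subr_eq0 eq_sym.
by rewrite /= /F fe0 subr_ge0.
Unshelve. all: by end_near.
Qed.
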